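(* Let $p,q$ be integers with $p\ge2$ and $0<q<p$, and let $D=D(g,f)$ be the recursive matrix with $g(x)=(1-p^2x)^{-q/p}$ and $f(x)=\dfrac{-x}{1-p^2x}$. Then for all integers $n\ge0$ and $m\ge0$, \[ D_{n,-m}=Q(p,q)_{n,m}=\frac{p^{2(n+m)}\,(q/p)_n\,\bigl((p-q)/p\bigr)_m}{(n+m)!}. \] That is, the matrix of $(p,q)$-super Patalan numbers forms the lower left quadrant ($n\ge0$, $k=-m\le0$) of $D$, with the column order reversed.
   Context: For power series $g(x)=\sum_{k\ge0}g_kx^k$ and $f(x)=\sum_{k\ge0}f_kx^k$ with $f_0=0$ and $f_1\ne0$, the recursive matrix $D(g,f)$ is the doubly infinite matrix with entries $D_{n,k}=[x^n]\bigl(g(x)f(x)^k\bigr)$ for all integers $n,k$, where for $k<0$, $f(x)^k$ denotes the multiplicative inverse of $f(x)^{-k}$ in the ring of formal Laurent series. The $(p,q)$-super Patalan numbers are $Q(p,q)_{n,m}=\frac{p^{2(n+m)}(q/p)_n((p-q)/p)_m}{(n+m)!}$ for $n,m\ge0$, where $(\alpha)_r=\alpha(\alpha+1)\cdots(\alpha+r-1)$ is the rising factorial with $(\alpha)_0=1$ (for $p=2,q=1$ these are the super Catalan numbers $\frac{(2n)!(2m)!}{n!\,m!\,(n+m)!}$). *)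

(* Defs.v *)
From HB Require Import structures.
From mathcomp Require Import all_boot all_order all_algebra.
Set Implicit Arguments. Unset Strict Implicit. Unset Printing Implicit Defensive.
Import Order.TTheory GRing.Theory Num.Theory.
Local Open Scope ring_scope.

Section PS.
Variable F : fieldType.

Definition ps := nat -> F.

Definition ps1 : ps := fun n => if n == 0%N then 1 else 0.
Definition psX : ps := fun n => if n == 1%N then 1 else 0.
Definition psadd (a b : ps) : ps := fun n => a n + b n.
Definition psscale (c : F) (a : ps) : ps := fun n => c * a n.
Definition psmul (a b : ps) : ps :=
  fun n => \sum_(i < n.+1) a i * b (n - i)%N.

(* Multiplicative inverse of a power series with a 0 <> 0:
   b_0 = 1/a_0,  b_n = -(1/a_0) * sum_{j=1}^n a_j b_{n-j}. *)
Fixpoint psinv_seq (a : ps) (n : nat) : seq F :=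
  match n with
  | 0 => [:: (a 0%N)^-1]
  | n'.+1 =>
      let s := psinv_seq a n' in
      rcons s (- (a 0%N)^-1 * \sum_(i < n'.+1) a i.+1 * nth 0 s (n' - i)%N)
  end.
Definition psinv (a : ps) : ps := fun n => nth 0 (psinv_seq a n) n.

(* Formal Laurent series  x^(lv L) * (lc L)(x),  lc L a power series. *)
Record laurent := Laurent { lv : int; lc : ps }.

Definition lcoef (L : laurent) (n : int) : F :=
  match (n - lv L)%R with
  | Posz i => lc L i
  | Negz _ => 0
  end.

Definition lone : laurent := Laurent 0 ps1.
Definition lmul (A B : laurent) : laurent :=
  Laurent (lv A + lv B) (psmul (lc A) (lc B)).
Definition lpow (L : laurent) (m : nat) : laurent := iter m (lmul L) lone.
(* multiplicative inverse in the field of Laurent series, valid when the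
   leading coefficient (lc L 0) is nonzero *)
Definition linv (L : laurent) : laurent := Laurent (- lv L) (psinv (lc L)).

Definition lps (a : ps) : laurent := Laurent 0 a.
(* A power series f with f_0 = 0, written as x * (f(x)/x); this is the same
   Laurent series as lps f when f_0 = 0, but with nonzero leading coefficient
   f_1, so that linv applies to its powers. *)
Definition lps_f (f : ps) : laurent := Laurent 1 (fun i => f i.+1).

Definition lpowz (f : ps) (k : int) : laurent :=
  match k with
  | Posz m => lpow (lps_f f) m
  | Negz m => linv (lpow (lps_f f) m.+1)
  end.

(* Recursive matrix D(g,f):  D_{n,k} = [x^n] (g(x) f(x)^k),  n, k integers.
   (Meaningful under f_0 = 0, f_1 <> 0.) *)
Definition rmat (g f : ps) (n k : int) : F := lcoef (lmul (lps g) (lpowz f k)) n.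

Definition gbinom (a : F) (k : nat) : F :=
  (\prod_(i < k) (a - i%:R)) / (k`!)%:R.

(* (1 + c x)^a := sum_k binom(a,k) c^k x^k  (binomial series) *)
Definition binser (c a : F) : ps := fun k => gbinom a k * c ^+ k.

Definition rising (a : F) (r : nat) : F := \prod_(i < r) (a + i%:R).

End PS.

Definition superPatalan (p q : nat) (n m : nat) : rat :=
  (p%:R) ^+ (2 * (n + m)) * rising (q%:R / p%:R) n
    * rising ((p%:R - q%:R) / p%:R) m / ((n + m)`!)%:R.

Definition gPat (p q : nat) : ps rat := binser (- (p%:R ^+ 2)) (- (q%:R / p%:R)).
Definition fPat (p : nat) : ps rat :=
  psmul (psscale (-1) (psX rat)) (psinv (psadd (ps1 rat) (psscale (- (p%:R ^+ 2)) (psX rat)))).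

(* Main.v *)
Require Import Defs.
From HB Require Import structures.
From mathcomp Require Import all_boot all_order all_algebra.
From mathcomp Require Import zify ring.
From Stdlib Require Import FunctionalExtensionality.
Set Implicit Arguments. Unset Strict Implicit.
Import Order.TTheory GRing.Theory Num.Theory.
Local Open Scope ring_scope.

Section G.
Variable F : fieldType.
Implicit Types a b c : ps F.

Definition tr a N : {poly F} := \poly_(i < N) a i.

Lemma psmul_tr a b n N : (n < N)%N -> psmul a b n = (tr a N * tr b N)`_n.
Proof.
move=> hn; rewrite coefM /psmul; apply: eq_bigr => i _; rewrite !coef_poly.
have h1 : (i < N)%N by have := ltn_ord i; lia.
have h2 : (n - i < N)%N by lia.
by rewrite h1 h2.
Qed.

Lemma psmulE a b n : psmul a b n = \sum_(i < n.+1) a i * b (n - i)%N.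
Proof. by []. Qed.

Lemma psmulC a b : psmul a b = psmul b a.
Proof.
apply: functional_extensionality => n.
by rewrite !(psmul_tr _ _ (ltnSn n)) mulrC.
Qed.

Lemma psmulA a b c : psmul a (psmul b c) = psmul (psmul a b) c.
Proof.
apply: functional_extensionality => n.
have e1 : psmul a (psmul b c) n = (tr a n.+1 * (tr b n.+1 * tr c n.+1))`_n.
  rewrite coefM psmulE; apply: eq_bigr => i _.
  rewrite (@psmul_tr b c (n - i) n.+1); last by lia.
  by rewrite coef_poly ltn_ord.
have e2 : psmul (psmul a b) c n = (tr a n.+1 * tr b n.+1 * tr c n.+1)`_n.
  rewrite coefM psmulE; apply: eq_bigr => i _.
  rewrite (@psmul_tr a b i n.+1 (ltn_ord i)).
  rewrite [in RHS]coef_poly (_ : (n - i < n.+1)%N = true) //; lia.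
by rewrite e1 e2 mulrA.
Qed.

Lemma psmul1l b : psmul (ps1 F) b = b.
Proof.
apply: functional_extensionality => n.
rewrite /psmul big_ord_recl /= big1 ?addr0 ?mul1r ?subn0 // => i _.
by rewrite /ps1 /= mul0r.
Qed.

Lemma psmul_sparse a b k : (forall i, (1 < i)%N -> a i = 0) ->
  psmul a b k.+1 = a 0%N * b k.+1 + a 1%N * b k.
Proof.
move=> ha; rewrite /psmul big_ord_recl big_ord_recl big1 => [|i _].
  by rewrite addr0 subn0 /bump /= subSS subn0.
by rewrite ha ?mul0r.
Qed.

Lemma size_psinv_seq a n : size (psinv_seq a n) = n.+1.
Proof. by elim: n => //= n IH; rewrite size_rcons IH. Qed.

Lemma nth_psinv_seq a n i : (i <= n)%N -> nth 0 (psinv_seq a n) i = psinv a i.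
Proof.
elim: n i => [|n IH] i hi.
  by have -> : i = 0%N by lia.
have [->|hne] := eqVneq i n.+1; first by [].
rewrite [psinv_seq _ _]/= nth_rcons size_psinv_seq (_ : (i < n.+1)%N = true); last by lia.
by apply: IH; lia.
Qed.

Lemma psinvS a n : psinv a n.+1 =
  - (a 0%N)^-1 * \sum_(i < n.+1) a i.+1 * psinv a (n - i)%N.
Proof.
have -> : psinv a n.+1 = nth 0 (rcons (psinv_seq a n) (- (a 0%N)^-1 * \sum_(i < n.+1) a i.+1 * nth 0 (psinv_seq a n) (n - i)%N)) n.+1 by [].
rewrite nth_rcons size_psinv_seq ltnn eqxx; congr (_ * _).
by apply: eq_bigr => i _; rewrite nth_psinv_seq // leq_subr.
Qed.

Lemma psinv_unique a b : (forall n, psmul a b n = ps1 F n) -> psinv a = b.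
Proof.
move=> H.
have H0 : a 0%N * b 0%N = 1 by have := H 0%N; rewrite /psmul big_ord1.
have a0 : a 0%N != 0 by apply/eqP => e; move: H0; rewrite e mul0r => /eqP; rewrite eq_sym oner_eq0.
apply: functional_extensionality => n; apply/esym.
elim/ltn_ind: n => -[|n] IH.
  by rewrite /psinv /= -[b 0%N](mulKf a0) H0 mulr1.
have := H n.+1; rewrite /psmul big_ord_recl /= subn0 => E.
rewrite psinvS.
have -> : \sum_(i < n.+1) a i.+1 * psinv a (n - i)%N = \sum_(i < n.+1) a (bump 0 i) * b (n.+1 - bump 0 i)%N.
  apply: eq_bigr => i _; rewrite IH // /bump leq0n add1n; lia.
have E' : \sum_(i < n.+1) a (bump 0 i) * b (n.+1 - bump 0 i)%N = - (a 0%N * b n.+1).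
  by apply/eqP; rewrite -addr_eq0 addrC; apply/eqP; rewrite E.
by rewrite E' mulrN mulNr opprK mulKf.
Qed.

End G.

Section S.
Variables p q : nat.
Hypothesis hp : (2 <= p)%N.
Hypothesis hqp : (q < p)%N.
Let P : rat := p%:R.

Lemma Pnz : P != 0.
Proof. by rewrite /P pnatr_eq0; case: p hp. Qed.

Let A := psadd (ps1 rat) (psscale (- (P ^+ 2)) (psX rat)).

Lemma geoA : psinv A = fun k => (P ^+ 2) ^+ k.
Proof.
apply: psinv_unique => -[|k].
  by rewrite psmulE big_ord1 /A /psadd /psscale /ps1 /psX /= mulr0 addr0 expr0 mulr1.
rewrite psmul_sparse => [|i hi]; last first.
  by rewrite /A /psadd /psscale /ps1 /psX; case: i hi => [|[|i]] //= _; rewrite mulr0 addr0.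
rewrite /A /psadd /psscale /ps1 /psX /= [(P ^+ 2) ^+ k.+1]exprS; ring.
Qed.

Lemma fPatS k : fPat p k.+1 = - (P ^+ 2) ^+ k.
Proof.
rewrite /fPat -/A geoA psmul_sparse => [|i hi]; last first.
  by rewrite /psscale /psX; case: i hi => [|[|i]] //= _; rewrite mulr0.
rewrite /psscale /psX /=; ring.
Qed.

Let c : ps rat := fun i => fPat p i.+1.
Let u : ps rat := fun k => if k == 0%N then -1 else if k == 1%N then P ^+ 2 else 0.

Lemma cu : psmul c u = ps1 rat.
Proof.
rewrite psmulC; apply: functional_extensionality => -[|k].
  by rewrite psmulE big_ord1 /c /u fPatS /= expr0 /ps1 /=; ring.
rewrite psmul_sparse => [|i hi]; last by rewrite /u; case: i hi => [|[|i]].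
rewrite /c /u !fPatS /ps1 /= [(P ^+ 2) ^+ k.+1]exprS; ring.
Qed.

Let Pm m := lc (lpow (lps_f (fPat p)) m).
Let W m := iter m (psmul u) (ps1 rat).

Lemma PW m : psmul (Pm m) (W m) = ps1 rat.
Proof.
elim: m => [|m IH]; first exact: psmul1l.
have -> : Pm m.+1 = psmul c (Pm m) by [].
have -> : W m.+1 = psmul u (W m) by [].
rewrite -psmulA (psmulA (Pm m)) (psmulC (Pm m) u) -psmulA IH psmulA cu.
by rewrite psmul1l.
Qed.

Let g := gPat p q.
Let H m := psmul g (W m).

Lemma HS m k : H m.+1 k.+1 = - H m k.+1 + P ^+ 2 * H m k.
Proof.
have -> : H m.+1 = psmul u (H m).
  by rewrite /H /= psmulA (psmulC g u) -psmulA.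
rewrite psmul_sparse => [|i hi]; last by rewrite /u; case: i hi => [|[|i]].
rewrite /u /=; ring.
Qed.


Lemma risingS (x : rat) k : rising x k.+1 = rising x k * (x + k%:R).
Proof. by rewrite /rising big_ord_recr. Qed.

Lemma Qstep n m : superPatalan p q n m.+1 =
  P ^+ 2 * superPatalan p q n m - superPatalan p q n.+1 m.
Proof.
rewrite /superPatalan addnS addSn !risingS factS natrM mulnS exprD -/P.
have e : (n + m).+1%:R = n%:R + m%:R + 1 :> rat by rewrite -natrD -addn1 natrD.
rewrite e.
have fnz : ((n + m)`!)%:R != 0 :> rat by rewrite pnatr_eq0 -lt0n fact_gt0.
have snz : n%:R + m%:R + 1 != 0 :> rat by rewrite -e pnatr_eq0.
have := Pnz; rewrite -/P => Pnz'.
field.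
by rewrite Pnz' fnz snz.
Qed.

Lemma Qbase n : g n = superPatalan p q n 0.
Proof.
rewrite /g /gPat /binser /gbinom /superPatalan addn0 /rising big_ord0 -/P.
have aux : forall k, \prod_(i < k) (- (q%:R / P) - i%:R) * (- (P ^+ 2)) ^+ k
   = (P ^+ 2) ^+ k * \prod_(i < k) (q%:R / P + i%:R).
  elim=> [|k IH]; first by rewrite !big_ord0 !expr0.
  rewrite !big_ord_recr /= exprSr.
  have -> : \prod_(i < k) (- (q%:R / P) - i%:R) * (- (q%:R / P) - k%:R) *
    ((- P ^+ 2) ^+ k * - P ^+ 2) = (\prod_(i < k) (- (q%:R / P) - i%:R) * (- P ^+ 2) ^+ k)
    * ((- (q%:R / P) - k%:R) * - P ^+ 2) by ring.
  rewrite IH [(P ^+ 2) ^+ k.+1]exprSr; ring.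
by rewrite mulrAC aux exprM; ring.
Qed.

Lemma Hmain m n : H m (n + m)%N = superPatalan p q n m.
Proof.
elim: m n => [|m IH] n.
  by rewrite /H /= psmulC psmul1l addn0 Qbase.
by rewrite addnS HS -addSn !IH Qstep addrC.
Qed.

Lemma lcoefE (L : laurent rat) (n : int) k : n - lv L = Posz k -> lcoef L n = lc L k.
Proof. by rewrite /lcoef => ->. Qed.

Lemma lv_lpow (L : laurent rat) m : lv L = 1 -> lv (lpow L m) = m%:Z.
Proof.
move=> h; elim: m => [|m IH] //.
by rewrite /lpow iterS /= -/(lpow L m) IH h -PoszD.
Qed.

Lemma rmat_eq m n : rmat (gPat p q) (fPat p) (n%:Z) (- (m%:Z)) = H m (n + m)%N.
Proof.
case: m => [|m].
  rewrite /rmat (@lcoefE _ _ n).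
    by rewrite addn0 /H /=.
  rewrite /=; lia.
rewrite /rmat (@lcoefE _ _ (n + m.+1)%N).
  change (psmul g (psinv (Pm m.+1)) (n + m.+1)%N = H m.+1 (n+m.+1)%N).
  by rewrite (@psinv_unique _ _ (W m.+1)) // => k; rewrite PW.
rewrite /= lv_lpow // sub0r opprK; lia.
Qed.

End S.

Theorem theorem4 (p q : nat) (hp : (2 <= p)%N) (hq0 : (0 < q)%N) (hqp : (q < p)%N)
  (n m : nat) :
  rmat (gPat p q) (fPat p) (n%:Z) (- (m%:Z)) = superPatalan p q n m.
Proof. by rewrite rmat_eq // Hmain. Qed.
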